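(* Let $n,t,t'$ be positive integers with $n\ge 2t(t+1)$ and $t'\log n\ge 4t\log t$, and let $m\ge 0$ be an integer. Then there exist a map $\mathcal{E}_b:\mathcal{S}_n\to\mathcal{S}_{n+t'+1}$ and a decoding map $\mathcal{D}$ such that for every $\sigma\in\mathcal{S}_n$ and every sequence $\pi_e$ obtained from $\pi=\mathcal{E}_b(\sigma)$ by a burst of stuck-at errors of length at most $t$ with threshold $m$ (as defined in the context), we have $\mathcal{D}(\pi_e)=\sigma$.
   Context: $\mathcal{S}_N$ denotes the set of permutations $\pi=(\pi(1),\ldots,\pi(N))$ of $[N]=\{1,\ldots,N\}$. Burst of stuck-at errors of length at most $t$ with threshold $m$: a sequence $\pi_e\in[N]^N$ is obtained from $\pi\in\mathcal{S}_N$ by such an error if there exist $j\in[N]$, $t_1\in[t]$ and positions $i_1,\ldots,i_{t_1}$ with $\pi(i_\ell)=j+\ell-1$ and $\pi(i_\ell)>m$ for all $\ell\in[t_1]$, such that $\pi_e(i_\ell)=j$ for all $\ell\in[t_1]$ and $\pi_e(i)=\pi(i)$ for $i\notin\{i_1,\ldots,i_{t_1}\}$. Logarithms are to a common base. *)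

(* Defs.v *)
From Stdlib Require Import Reals.
From mathcomp Require Import all_boot all_order all_fingroup.
Set Implicit Arguments.
Unset Strict Implicit.
Unset Printing Implicit Defensive.

(* Convention: S_N is modelled by 'S_N = {perm 'I_N}; positions and values
   are 0-based ordinals, and the 1-based value of x : 'I_N is (val x).+1.
   A sequence in [N]^N is modelled by {ffun 'I_N -> 'I_N} with the same
   value convention. *)
Definition v1 {N : nat} (x : 'I_N) : nat := (val x).+1.

Definition burst_stuck {N : nat} (t m : nat) (pi : 'S_N)
    (pie : {ffun 'I_N -> 'I_N}) : Prop :=
  exists (j t1 : nat) (pos : nat -> 'I_N),
    [/\ 1 <= j <= N, 1 <= t1 <= t,
        (forall l, 1 <= l <= t1 ->
           [/\ v1 (pi (pos l)) = j + l - 1, m < v1 (pi (pos l)) & v1 (pie (pos l)) = j]) &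
        (forall i : 'I_N, (forall l, 1 <= l <= t1 -> i <> pos l) -> pie i = pi i)].

(* t' * log n >= 4 * t * log t  (natural log; the base is irrelevant). *)
Definition log_cond (n t t' : nat) : Prop :=
  Rle (Rmult (INR 4) (Rmult (INR t) (ln (INR t)))) (Rmult (INR t') (ln (INR n))).

(* Main.v *)
Require Import Defs.
From Stdlib Require Import Reals Lra Classical ClassicalEpsilon.
From mathcomp Require Import all_boot all_order all_fingroup.
From mathcomp Require Import zify.

Lemma fact_le_pow k : k`! <= k ^ k.
Proof.
elim: k => [//|k IH]; rewrite factS expnS leq_mul2l /=.
apply: (leq_trans IH); case: k {IH} => [//|k].
by rewrite leq_exp2r.
Qed.

Lemma fact_mul_pow n k : n`! * n ^ k <= (n + k)`!.
Proof.
elim: k => [|k IH]; first by rewrite expn0 muln1 addn0.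
rewrite addnS factS expnS mulnCA.
apply: leq_mul; last exact: IH.
lia.
Qed.

Lemma expn_pow m k : m ^ k = Nat.pow m k.
Proof. elim: k => [//|k IH]; by rewrite expnS IH. Qed.

Lemma log_nat (n t t' : nat) : 0 < n -> 0 < t -> log_cond n t t' ->
  t ^ (4 * t) <= n ^ t'.
Proof.
move=> n0 t0 H; rewrite leqNgt; apply/negP => /ltP Hlt.
have Hn : Rlt 0 (INR n) by apply: lt_0_INR; apply/ltP.
have Ht : Rlt 0 (INR t) by apply: lt_0_INR; apply/ltP.
rewrite !expn_pow in Hlt; apply lt_INR in Hlt.
rewrite !pow_INR in Hlt.
have := ln_increasing _ _ (pow_lt (INR n) t' Hn) Hlt.
rewrite !ln_pow //.
change (4 * t) with (Nat.mul 4 t); rewrite mult_INR.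
unfold log_cond in H. lra.
Qed.

Section Code.
Variables N t : nat.

Definition Wn (a : nat) : {set 'I_N} := [set x : 'I_N | (a <= x) && (x < a + t)].
Definition Rset : {set {perm 'I_N}} :=
  \bigcup_(a < N) [set r | perm_on (Wn a) r].

Lemma card_Wn a : #|Wn a| <= t.
Proof.
rewrite cardE.
have -> : size (enum (Wn a)) = size [seq (nat_of_ord x - a) | x <- enum (Wn a)] by rewrite size_map.
rewrite -(size_iota 0 t); apply: uniq_leq_size.
  rewrite map_inj_in_uniq ?enum_uniq // => x y.
  rewrite !mem_enum !inE => /andP[hx _] /andP[hy _] e; apply: ord_inj; lia.
move=> k /mapP [x]; rewrite mem_enum inE => /andP[h1 h2] ->.
rewrite mem_iota; lia.
Qed.

Lemma card_bigcup_le (T : finType) k (F : nat -> {set T}) :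
  #|\bigcup_(i < k) F i| <= \sum_(i < k) #|F i|.
Proof.
elim: k => [|k IH]; first by rewrite !big_ord0 cards0.
rewrite !big_ord_recr /=.
have [hU _] := leq_card_setU (\bigcup_(i < k) F i) (F k).
eapply leq_trans; [exact hU|]. by rewrite leq_add2r.
Qed.

Lemma card_R : #|Rset| <= N * t`!.
Proof.
refine (leq_trans (card_bigcup_le _ N (fun a => [set r | perm_on (Wn a) r])) _).
rewrite -[N in N * _]card_ord -sum_nat_const.
apply: leq_sum => a _.
have -> : #|[set r | perm_on (Wn a) r]| = #|perm_on (Wn a)|.
  by apply: eq_card => r; rewrite inE.
by rewrite card_perm leq_fact // card_Wn.
Qed.

Lemma R1 : 0 < N -> 1%g \in Rset.
Proof.
move=> N0; apply/bigcupP; exists (Ordinal N0) => //.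
by rewrite inE perm_on1.
Qed.

Lemma RV r : r \in Rset -> (r^-1)%g \in Rset.
Proof.
by move/bigcupP => [a _]; rewrite inE => h; apply/bigcupP; exists a; rewrite // inE perm_onV.
Qed.

Definition codeb (C : {set {perm 'I_N}}) :=
  [forall c in C, forall d in C, (c != d) ==> ((c^-1 * d)%g \notin Rset)].

Definition Cmax := [arg max_(C > set0 | codeb C) #|C|].

Lemma codeb0 : codeb set0.
Proof. by apply/forall_inP => c; rewrite inE. Qed.

Lemma Cmax_spec : codeb Cmax /\ forall C, codeb C -> #|C| <= #|Cmax|.
Proof.
rewrite /Cmax; case: arg_maxnP; first exact: codeb0.
by move=> C h1 h2; split.
Qed.

Lemma cover g : 0 < N -> exists2 c, c \in Cmax & (c^-1 * g)%g \in Rset.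
Proof.
move=> N0; have [hC hM] := Cmax_spec.
case: (classic (exists2 c, c \in Cmax & (c^-1 * g)%g \in Rset)) => // H.
have Hn : forall c, c \in Cmax -> (c^-1 * g)%g \notin Rset.
  by move=> c hc; apply/negP => hr; apply: H; exists c.
have gC : g \notin Cmax.
  by apply/negP => hg; move: (Hn g hg); rewrite mulVg R1.
have : codeb (g |: Cmax).
  apply/forall_inP => c; rewrite in_setU1 => hc; apply/forall_inP => d.
  rewrite in_setU1 => hd; apply/implyP => cd.
  case/orP: hc => [/eqP Ec | hc]; case/orP: hd => [/eqP Ed | hd]; subst.
  - by rewrite eqxx in cd.
  - apply/negP => hr; move: (RV _ hr); rewrite invMg invgK => hr'.
    by move: (Hn d hd); rewrite hr'.
  - exact: Hn.
  - by move/forall_inP: hC => /(_ c hc)/forall_inP/(_ d hd)/implyP/(_ cd).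
move/hM; rewrite cardsU1 gC /=; lia.
Qed.

Lemma card_Cmax : 0 < N -> N`! <= #|Cmax| * #|Rset|.
Proof.
move=> N0.
pose f (g : {perm 'I_N}) := 
  let c := odflt 1%g [pick c in Cmax | (c^-1 * g)%g \in Rset] in (c, (c^-1 * g)%g).
have finj : injective f.
  move=> g1 g2 [e1 e2].
  by rewrite -[g1](mulKVg (odflt 1%g [pick c in Cmax | (c^-1 * g1)%g \in Rset])) e2 -e1 mulKVg.
rewrite -card_Sn -cardsT -(card_imset _ finj) -cardsX.
apply: subset_leq_card; apply/subsetP => _ /imsetP [g _ ->].
rewrite /f inE /=.
case: pickP => [c /andP[h1 h2] | H] /=; first by rewrite h1 h2.
have [c hc hr] := cover g N0.
by move: (H c); rewrite hc hr.
Qed.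


End Code.

Lemma burst_R N t m (pi pi' : 'S_N) pie :
  burst_stuck t m pi pie -> burst_stuck t m pi' pie -> (pi^-1 * pi')%g \in Rset N t.
Proof.
move=> [j [t1 [pos [hj ht1 hpos hout]]]] [j' [t1' [pos' [hj' ht1' hpos' hout']]]].
have key : forall i, pi i = pi' i \/ exists2 l, 1 <= l <= t1 & i = pos l.
  move=> i; case: (classic (exists2 l, 1 <= l <= t1 & i = pos l)) => [h|h]; [by right|left].
  have ei : pie i = pi i by apply: hout => l hl e; apply: h; exists l.
  case: (classic (exists2 l, 1 <= l <= t1' & i = pos' l)) => [[l' hl' Ei]|h'];
    last by rewrite -ei; apply: hout' => l hl e; apply: h'; exists l.
  have [a1 a2 a3] := hpos' l' hl'.
  rewrite -Ei in a1 a2 a3.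
  case: (l' =P 1) => [El|Nl].
    subst l'; apply: val_inj; move: a1 a3; rewrite ei /v1 /=; lia.
  have hl1 : 1 <= 1 <= t1' by lia.
  have [b1 b2 b3] := hpos' 1 hl1.
  have ne : pos' 1 <> i.
    move=> E1; rewrite E1 in b1; move: a1 b1; rewrite /v1; lia.
  case: (classic (exists2 l, 1 <= l <= t1 & pos' 1 = pos l)) => [[l1 hl1' e1]|h1].
  - have [c1 c2 c3] := hpos l1 hl1'; rewrite -e1 in c3.
    have hl0 : 1 <= 1 <= t1 by lia.
    have [d1 d2 d3] := hpos 1 hl0.
    have : pi i = pi (pos 1).
      apply: val_inj; move: d1 a3 c3 b3; rewrite ei /v1 /=; lia.
    move/perm_inj => E2; exfalso; apply: h; exists 1 => //.
  - have e2 : pie (pos' 1) = pi (pos' 1) by apply: hout => l hl e; apply: h1; exists l.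
    have : pi (pos' 1) = pi i.
      apply: val_inj; move: a3 b3; rewrite ei e2 /v1 /=; lia.
    by move/perm_inj.
have j0 : j.-1 < N by lia.
apply/bigcupP; exists (Ordinal j0) => //; rewrite inE; apply/subsetP => x; rewrite inE => hx.
rewrite inE /=.
case: (key (pi^-1 x)%g) => [e|[l hl e]].
  by move: hx; rewrite permM -e permKV eqxx.
have [a1 _ _] := hpos l hl; rewrite -e permKV /v1 in a1.
have ex : val x = nat_of_ord x by [].
rewrite ex in a1; lia.
Qed.

Theorem theorem2 (n t t' m : nat) :
  0 < n -> 0 < t -> 0 < t' -> 2 * t * (t + 1) <= n -> log_cond n t t' ->
  exists (E : 'S_n -> 'S_(n + t' + 1))
         (D : {ffun 'I_(n + t' + 1) -> 'I_(n + t' + 1)} -> 'S_n),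
    forall (sigma : 'S_n) (pie : {ffun 'I_(n + t' + 1) -> 'I_(n + t' + 1)}),
      burst_stuck t m (E sigma) pie -> D pie = sigma.
Proof.
move=> n0 t0 t'0 _ hlog.
have N0 : 0 < n + t' + 1 by lia.
have [hC _] := Cmax_spec (n + t' + 1) t.
have hcard : n`! <= #|Cmax (n + t' + 1) t|.
  have h1 := card_Cmax (n + t' + 1) t N0.
  have h2 := card_R (n + t' + 1) t.
  have hf : t`! <= n ^ t'.
    have h4 : t <= 4 * t by lia.
    exact: (leq_trans (fact_le_pow t) (leq_trans (leq_pexp2l t0 h4) (log_nat _ _ _ n0 t0 hlog))).
  have h3 : n`! * ((n + t' + 1) * t`!) <= (n + t' + 1)`!.
    rewrite (_ : n + t' + 1 = (n + t').+1); last by lia.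
    rewrite factS mulnCA leq_mul2l /=.
    apply: leq_trans (fact_mul_pow n t').
    by rewrite leq_mul2l hf orbT.
  have hX : 0 < (n + t' + 1) * t`! by rewrite muln_gt0 N0 fact_gt0.
  rewrite -(leq_pmul2r hX).
  apply: leq_trans h3 _; apply: leq_trans h1 _.
  by rewrite leq_mul2l h2 orbT.
pose E := fun sigma : 'S_n => nth 1%g (enum (Cmax (n + t' + 1) t)) (enum_rank sigma).
have Esz : forall s : 'S_n, enum_rank s < size (enum (Cmax (n + t' + 1) t)).
  move=> s; rewrite -cardE; apply: leq_trans hcard.
  by rewrite -card_Sn ltn_ord.
have inC : forall s, E s \in Cmax (n + t' + 1) t.
  by move=> s; rewrite -mem_enum mem_nth.
exists E.
exists (fun pie => epsilon (inhabits 1%g) (fun s => burst_stuck t m (E s) pie)).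
move=> sigma pie hb.
set s0 := epsilon _ _.
have hs0 : burst_stuck t m (E s0) pie.
  exact: (epsilon_spec (inhabits 1%g) (fun s => burst_stuck t m (E s) pie) (ex_intro _ sigma hb)).
have hR := burst_R _ _ _ _ _ _ hs0 hb.
case: (E s0 =P E sigma) => [e|ne].
  move: e => /eqP; rewrite /E nth_uniq ?enum_uniq // => /eqP e.
  by apply: enum_rank_inj; apply: ord_inj.
move/forall_inP: hC => /(_ _ (inC s0))/forall_inP/(_ _ (inC sigma))/implyP.
by move=> /(_ (introN eqP ne)); rewrite hR.
Qed.
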